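(* Let $\mathfrak g=\mathfrak k\oplus\mathfrak m$ be a Pauli-spanned Cartan decomposition and let $\mathfrak b=\mathrm{span}_{i\mathbb R}\{b_1,\dots,b_d\}\subseteq\mathfrak m$ with $b_1,\dots,b_d\in\tilde{\mathfrak m}$ pairwise commuting Pauli strings, all lying in the same connected component of the frustration graph of $\mathfrak g$. Suppose $2\le r\le d$ and $\tilde{\mathfrak k}^{r-1}_{1\dots r-2}$ is non-empty. Then $\tilde{\mathfrak k}^r_{1\dots r-1}$ is non-empty only if $\tilde{\mathfrak k}^{r-1,r}_{1\dots r-2}$ is non-empty.
   Context: Pauli strings on $n$ qubits are tensor products of $I,X,Y,Z$, not all identity; two Pauli strings either commute or anticommute. A Pauli-spanned Cartan decomposition is $\mathfrak g=\mathfrak k\oplus\mathfrak m\subseteq\mathfrak{su}(2^n)$ with $\mathfrak k=\mathrm{span}_{i\mathbb R}\tilde{\mathfrak k}$, $\mathfrak m=\mathrm{span}_{i\mathbb R}\tilde{\mathfrak m}$, $\mathfrak g=\mathrm{span}_{i\mathbb R}\tilde{\mathfrak g}$ with $\tilde{\mathfrak g}=\tilde{\mathfrak k}\sqcup\tilde{\mathfrak m}$ the set of all Pauli strings (up to phase) $\sigma$ with $i\sigma\in\mathfrak g$, and $[\mathfrak k,\mathfrak k]\subseteq\mathfrak k$, $[\mathfrak m,\mathfrak m]\subseteq\mathfrak k$, $[\mathfrak k,\mathfrak m]\subseteq\mathfrak m$. The frustration graph of $\mathfrak g$ has vertex set $\tilde{\mathfrak g}$, with edges between anticommuting pairs. For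 disjoint index lists, $\tilde{\mathfrak k}^{i_1i_2\dots}_{j_1j_2\dots}$ is the set of $k\in\tilde{\mathfrak k}$ anticommuting with every $b_{i_p}$ and commuting with every $b_{j_q}$ (no condition on other indices); e.g. $\tilde{\mathfrak k}^{r-1}_{1\dots r-2}$ consists of those elements commuting with $b_1,\dots,b_{r-2}$ and anticommuting with $b_{r-1}$. *)

(* Defs.v *)
From mathcomp Require Import all_boot.
Set Implicit Arguments. Unset Strict Implicit. Unset Printing Implicit Defensive.

(* Pauli strings on n qubits, up to phase, in the symplectic (binary) encoding:
   at qubit i, (x,z) = (false,false) is I, (true,false) is X,
   (true,true) is Y, (false,true) is Z. *)
Definition pauli (n : nat) := {ffun 'I_n -> bool * bool}.

Definition pid (n : nat) : pauli n := [ffun _ => (false, false)].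

(* two Pauli strings anticommute iff the symplectic form is odd, i.e. the
   number of qubits where both are non-identity and different is odd *)
Definition anticomm n (p q : pauli n) : bool :=
  odd #|[set i : 'I_n | ((p i).1 && (q i).2) (+) ((p i).2 && (q i).1)]|.

Definition commute_p n (p q : pauli n) : bool := ~~ anticomm p q.

Definition pmul n (p q : pauli n) : pauli n :=
  [ffun i => (((p i).1 (+) (q i).1), ((p i).2 (+) (q i).2))].

(* A Pauli-spanned Cartan decomposition g = k (+) m, given by the sets
   Kt = k~ and Mt = m~ of Pauli strings spanning k and m.  For Pauli strings
   a, b: [i a, i b] = 0 if they commute, and is a nonzero real multiple of
   i (a b) (a Pauli string up to phase) if they anticommute.  Hence, by the
   linear independence of Pauli strings, the bracket conditions on the spans
   are exactly the following closure conditions. *)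
Definition cartan_decomp n (Kt Mt : {set pauli n}) : Prop :=
  [/\ [disjoint Kt & Mt] /\ pid n \notin Kt /\ pid n \notin Mt,
      (forall a b, a \in Kt -> b \in Kt -> anticomm a b -> pmul a b \in Kt),
      (forall a b, a \in Mt -> b \in Mt -> anticomm a b -> pmul a b \in Kt) &
      (forall a b, a \in Kt -> b \in Mt -> anticomm a b -> pmul a b \in Mt)].

Definition frust_edge n (Gt : {set pauli n}) : rel (pauli n) :=
  fun p q => [&& p \in Gt, q \in Gt & anticomm p q].

Definition same_component n (Gt : {set pauli n}) (p q : pauli n) : bool :=
  connect (frust_edge Gt) p q.

(* k~^{i_1 i_2 ...}_{j_1 j_2 ...}: elements of Kt anticommuting with every
   b_{i_p} (ip in A) and commuting with every b_{j_q} (jq in C). *)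
Definition ksub n (Kt : {set pauli n}) (b : nat -> pauli n)
  (A C : seq nat) : {set pauli n} :=
  [set k in Kt | all (fun i => anticomm k (b i)) A &&
                 all (fun j => commute_p k (b j)) C].

(* Main.v *)
Require Import Defs.
From mathcomp Require Import all_boot zify.
Set Implicit Arguments. Unset Strict Implicit. Unset Printing Implicit Defensive.

Lemma odd_sumE (I : Type) (r : seq I) (F : I -> nat) :
  odd (\sum_(i <- r) F i) = \big[addb/false]_(i <- r) odd (F i).
Proof. by elim: r => [|x r IH]; rewrite ?big_nil // !big_cons oddD IH. Qed.

Lemma odd_card_set (T : finType) (P : pred T) :
  odd #|[set i | P i]| = \big[addb/false]_(i : T) P i.
Proof.
rewrite cardsE -sum1_card big_mkcond /= odd_sumE.
by apply: eq_bigr => i _; rewrite unfold_in; case: (P i).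
Qed.

Lemma odd_card_addb (T : finType) (P Q : pred T) :
  odd #|[set i | P i (+) Q i]| = odd #|[set i | P i]| (+) odd #|[set i | Q i]|.
Proof. by rewrite !odd_card_set -big_split. Qed.

Lemma anticommC n (p q : pauli n) : anticomm p q = anticomm q p.
Proof.
rewrite /anticomm; congr (odd _); apply: eq_card => i; rewrite !inE.
by case: (p i) => [[] []]; case: (q i) => [[] []].
Qed.

Lemma anticommMl n (p q s : pauli n) :
  anticomm (pmul p q) s = anticomm p s (+) anticomm q s.
Proof.
rewrite /anticomm -odd_card_addb; congr (odd _); apply: eq_card => i; rewrite !inE !ffunE /=.
by case: (p i) => [[] []]; case: (q i) => [[] []]; case: (s i) => [[] []].
Qed.

Lemma anticommMr n (p q s : pauli n) :
  anticomm s (pmul p q) = anticomm s p (+) anticomm s q.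
Proof. by rewrite anticommC anticommMl !(anticommC s). Qed.

Lemma anticommxx n (p : pauli n) : anticomm p p = false.
Proof.
rewrite /anticomm; have -> : [set i | ((p i).1 && (p i).2) (+) ((p i).2 && (p i).1)] = set0.
  by apply/setP => i; rewrite !inE; case: (p i) => [[] []].
by rewrite cards0.
Qed.

Section G.
Variable n : nat.
Variable G : {set pauli n}.
Hypothesis closedG : forall u v, u \in G -> v \in G -> anticomm u v -> pmul u v \in G.

Lemma path_lemma (a : pauli n) :
  forall p v, v \in G ->
  [|| v == a, anticomm v a | [exists x, [&& x \in G, anticomm x a & anticomm x v]]] ->
  path (frust_edge G) v p ->
  [|| last v p == a, anticomm (last v p) a |
      [exists x, [&& x \in G, anticomm x a & anticomm x (last v p)]]].
Proof.
elim=> [|w p IH] v vG Pv //=.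
case/andP=> /and3P[_ wG vw] pth; apply: IH => //.
have [wa|wa] := eqVneq w a; first by rewrite ?wa ?eqxx.
case wA: (anticomm w a); first by rewrite orbT.
rewrite /=; case/or3P: Pv.
- by move/eqP=> va; move: vw; rewrite va anticommC wA.
- move=> va; apply/existsP; exists v; rewrite vG va /=.
  by [].
- case/existsP=> x /and3P[xG xa xv].
  case va: (anticomm v a).
    by apply/existsP; exists v; rewrite vG va vw.
  case xw: (anticomm x w).
    by apply/existsP; exists x; rewrite xG xa xw.
  apply/existsP; exists (pmul x v); rewrite closedG //=.
  by rewrite !anticommMl xa xw va vw.
Qed.

Lemma pmul_eq (q k1 k2 c : pauli n) :
  pmul (pmul (pmul q k1) k2) (pmul q c) = pmul (pmul k1 k2) c.
Proof.
apply/ffunP => i; rewrite !ffunE /=.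
by case: (q i) => [[] []]; case: (k1 i) => [[] []]; case: (k2 i) => [[] []]; case: (c i) => [[] []].
Qed.

Lemma key (x a bb c k1 k2 : pauli n) :
  x \in G -> a \in G -> bb \in G -> c \in G -> k1 \in G -> k2 \in G ->
  anticomm x a -> anticomm x bb -> anticomm x c ->
  anticomm a k1 -> anticomm a k2 = false -> anticomm bb k1 = false -> anticomm bb k2 ->
  anticomm a c = false -> anticomm bb c = false -> anticomm a bb = false ->
  anticomm k1 c = false -> anticomm k2 c = false -> anticomm k1 k2 = false ->
  pmul (pmul k1 k2) c \in G.
Proof.
move=> xG aG bG cG k1G k2G xa xb xc ak1 ak2 bk1 bk2 ac bc ab k1c k2c k12.
have [p [pG pk1 pb pc]] : exists p, [/\ p \in G, anticomm p k1, anticomm p bb & anticomm p c].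
  case xk1: (anticomm x k1); first by exists x.
  exists (pmul x a); rewrite closedG // !anticommMl xk1 ak1 xb xc.
  by rewrite ab ac.
have [q [qG qk1 qk2 qc]] : exists q, [/\ q \in G, anticomm q k1, anticomm q k2 & anticomm q c].
  case pk2: (anticomm p k2); first by exists p.
  exists (pmul p bb); rewrite closedG // !anticommMl pk1 pk2 bk1 bk2 pc bc.
  by [].
have q1G : pmul q k1 \in G by apply: closedG.
have q2G : pmul (pmul q k1) k2 \in G.
  by apply: closedG => //; rewrite anticommMl qk2 k12.
have qcG : pmul q c \in G by apply: closedG.
rewrite -(pmul_eq q); apply: closedG => //.
rewrite !anticommMl !anticommMr !anticommxx qc k1c k2c.
by rewrite (anticommC k1 q) (anticommC k2 q) qk1 qk2.
Qed.

End G.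

Lemma pmulC n (p q : pauli n) : pmul p q = pmul q p.
Proof. by apply/ffunP => i; rewrite !ffunE /= addbC [X in (_, X)]addbC. Qed.

Theorem lemmaC2 (n : nat) (Kt Mt : {set pauli n}) (d : nat)
  (b : nat -> pauli n) (r : nat) :
  cartan_decomp Kt Mt ->
  (forall i, 1 <= i <= d -> b i \in Mt) ->
  (forall i j, 1 <= i <= d -> 1 <= j <= d -> commute_p (b i) (b j)) ->
  (forall i j, 1 <= i <= d -> 1 <= j <= d ->
     same_component (Kt :|: Mt) (b i) (b j)) ->
  2 <= r <= d ->
  ksub Kt b [:: r.-1] (iota 1 (r - 2)) != set0 ->
  ksub Kt b [:: r] (iota 1 r.-1) != set0 ->
  ksub Kt b [:: r.-1; r] (iota 1 (r - 2)) != set0.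
Proof.
move=> [_ cKK cMM cKM] bM bcomm bconn /andP[r2 rd].
move=> /set0Pn[k1 k1in] /set0Pn[k2 k2in].
move: k1in k2in; rewrite !inE /= !andbT.
case/andP=> k1K /andP[k1a /allP k1c]; case/andP=> k2K /andP[k2b /allP k2c].
set G := Kt :|: Mt.
have closedG : forall u v, u \in G -> v \in G -> anticomm u v -> pmul u v \in G.
  move=> u v; rewrite !inE => /orP[uK|uM] /orP[vK|vM] uv.
  - by rewrite cKK.
  - by rewrite cKM ?orbT.
  - by rewrite pmulC cKM ?orbT // anticommC.
  - by rewrite cMM.
have ia : 1 <= r.-1 <= d by lia.
have ib : 1 <= r <= d by lia.
have ij : forall j, j \in iota 1 (r - 2) -> 1 <= j <= d.
  move=> j; rewrite mem_iota => /andP[j1 jr]; lia.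
have cm : forall i j, 1 <= i <= d -> 1 <= j <= d -> anticomm (b i) (b j) = false.
  by move=> i j hi hj; apply: negbTE; apply: bcomm.
have aM := bM _ ia; have bbM := bM _ ib.
have k2a : anticomm k2 (b r.-1) = false.
  apply: negbTE; apply: k2c; rewrite mem_iota; lia.
have k2j : forall j, j \in iota 1 (r - 2) -> anticomm k2 (b j) = false.
  move=> j; rewrite mem_iota => /andP[j1 jr]; apply: negbTE; apply: k2c.
  rewrite mem_iota; lia.
have k1j : forall j, j \in iota 1 (r - 2) -> anticomm k1 (b j) = false.
  by move=> j /k1c /negbTE.
suff [y [yG ya yb yj]] : exists y, [/\ y \in G, anticomm y (b r.-1), anticomm y (b r) &
    forall j, j \in iota 1 (r - 2) -> anticomm y (b j) = false].
  apply/set0Pn.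
  have [yK|yK] := boolP (y \in Kt).
    exists y; rewrite !inE yK /=; apply/andP; split; first by apply/and3P; split.
    by apply/allP => j /yj; rewrite /commute_p => ->.
  have yM : y \in Mt by move: yG; rewrite inE (negbTE yK).
  exists (pmul y (b r.-1)); rewrite !inE cMM //= !anticommMl ya yb anticommxx cm //=.
  by apply/allP => j jin; rewrite /commute_p anticommMl yj // cm // ij.
have k1G : k1 \in G by rewrite inE k1K.
have k2G : k2 \in G by rewrite inE k2K.
case k1b: (anticomm k1 (b r)).
  by exists k1; split => //; rewrite inE k1K.
case k12: (anticomm k1 k2).
  exists (pmul k1 k2); split.
  - exact: closedG.
  - by rewrite anticommMl k1a k2a.
  - by rewrite anticommMl k1b k2b.
  - by move=> j jin; rewrite anticommMl k1j // k2j.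
have [x [xG xa xb]] : exists x, [/\ x \in G, anticomm x (b r.-1) & anticomm x (b r)].
  have := bconn _ _ ia ib; rewrite /same_component => /connectP[p pth lst].
  have aG : b r.-1 \in G by rewrite inE aM orbT.
  have := @path_lemma _ _ closedG (b r.-1) p (b r.-1) aG; rewrite eqxx /= => /(_ isT pth); rewrite -lst.
  case/or3P.
  - move/eqP=> eab; by move: k2a; rewrite -eab k2b.
  - by rewrite anticommC cm.
  - case/existsP=> x /and3P[xG xa xb]; by exists x.
case: (boolP (all (fun j => ~~ anticomm x (b j)) (iota 1 (r - 2)))) => [/allP xall|].
  by exists x; split => // j /xall /negbTE.
case/allPn=> j jin /negPn xj.
exists (pmul (pmul k1 k2) (b j)); split.
- apply: (key closedG xG _ _ _ k1G k2G xa xb xj) => //.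
  + by rewrite inE aM orbT.
  + by rewrite inE bbM orbT.
  + by rewrite inE (bM _ (ij _ jin)) orbT.
  + by rewrite anticommC.
  + by rewrite anticommC.
  + by rewrite anticommC.
  + by rewrite anticommC.
  + by rewrite cm // ij.
  + by rewrite cm // ij.
  + by rewrite cm.
  + by rewrite k1j.
  + by rewrite k2j.
- by rewrite !anticommMl k1a k2a cm // ij.
- by rewrite !anticommMl k1b k2b cm // ij.
- by move=> i iin; rewrite !anticommMl k1j // k2j // cm // ij.
Qed.
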